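(* Let $q$ be a prime power, $\ell\ge1$, and let $\mathcal{A}$ be a central hyperplane arrangement in $\mathbb{F}_q^\ell$. If $\chi(\mathcal{A}, q^k)=0$ for some integer $k\geq 0$, then $\chi(\mathcal{A}, q^j)=0$ for all integers $j$ with $0\leq j\leq k$.
   Context: A (central) hyperplane arrangement $\mathcal{A}$ in a vector space $V$ over a field $\mathbb{K}$ is a finite set of linear subspaces of codimension one. $L(\mathcal{A})$ denotes the set of all intersections of subsets of $\mathcal{A}$ (including $V$ itself as the empty intersection), ordered by reverse inclusion, with minimal element $\hat 0=V$. The Möbius function $\mu:L(\mathcal{A})\to\mathbb{Z}$ is defined by $\mu(\hat0)=1$ and $\mu(X)=-\sum_{Y<X}\mu(Y)$ for $X>\hat 0$. The characteristic polynomial is $\chi(\mathcal{A},t)=\sum_{X\in L(\mathcal{A})}\mu(X)t^{\dim X}$. *)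

(* Defs.v *)
From mathcomp Require Import all_boot all_algebra all_field.
Set Implicit Arguments. Unset Strict Implicit. Unset Printing Implicit Defensive.
Import GRing.Theory.
Local Open Scope ring_scope.

(* Ambient space: 'rV[F]_l, i.e. F^l, for a finite field F (so q = #|F|). *)

Definition is_hyperplane (F : fieldType) (l : nat) (H : {vspace 'rV[F]_l}) : bool :=
  ((\dim H).+1 == \dim (fullv : {vspace 'rV[F]_l}))%N.

Definition is_arrangement (F : fieldType) (l : nat) (A : seq {vspace 'rV[F]_l}) : bool :=
  uniq A && all (@is_hyperplane F l) A.

Definition intersection_lattice (F : fieldType) (l : nat) (A : seq {vspace 'rV[F]_l})
  : seq {vspace 'rV[F]_l} :=
  undup (map (fun B : {set 'I_(size A)} =>
                (\bigcap_(i in B) (tnth (in_tuple A) i))%VS)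
             (enum [set: {set 'I_(size A)}])).

(* Möbius function on L(A), ordered by reverse inclusion:
   mu(V) = 1,  mu(X) = - sum_{Y in L, Y < X} mu(Y), where Y < X means Y strictly
   contains X.  Defined by recursion with fuel; any fuel >= dim V - dim X gives
   the correct value (a strict chain above X has length <= dim V - dim X). *)
Fixpoint mobius_fuel (F : fieldType) (l : nat) (A : seq {vspace 'rV[F]_l})
  (n : nat) (X : {vspace 'rV[F]_l}) : int :=
  if X == fullv then 1 else
  match n with
  | 0 => 0
  | n'.+1 => - \sum_(Y <- intersection_lattice A | (X <= Y)%VS && (X != Y)) mobius_fuel A n' Y
  end.

Definition mobius (F : fieldType) (l : nat) (A : seq {vspace 'rV[F]_l})
  (X : {vspace 'rV[F]_l}) : int :=
  mobius_fuel A (\dim (fullv : {vspace 'rV[F]_l})) X.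

Definition char_poly_arr (F : fieldType) (l : nat) (A : seq {vspace 'rV[F]_l})
  : {poly int} :=
  \sum_(X <- intersection_lattice A) (mobius A X)%:P * 'X^(\dim X).

(* Main.v *)
Require Import Defs.
From mathcomp Require Import all_boot all_algebra all_field.
From mathcomp Require Import zify.
Import GRing.Theory Num.Theory.
Local Open Scope ring_scope.

Section Arr.
Variables (F : finFieldType) (l : nat) (A : seq {vspace 'rV[F]_l}).

Local Notation vT := 'rV[F]_l.
Local Notation L := (intersection_lattice A).
Local Notation dimV := (\dim (fullv : {vspace vT})).
Local Notation H i := (tnth (in_tuple A) i).

Lemma inL (X : {vspace vT}) :
  reflect (exists B : {set 'I_(size A)}, X = (\bigcap_(i in B) H i)%VS) (X \in L).
Proof.
rewrite /intersection_lattice mem_undup; apply: (iffP mapP).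
  by case=> B _ ->; exists B.
by case=> B ->; apply: (ex_intro2 _ _ B); rewrite ?mem_enum ?in_setT.
Qed.

Lemma fullv_inL : (fullv : {vspace vT}) \in L.
Proof.
apply/inL; exists set0; rewrite big_pred0 // => i; by rewrite in_set0.
Qed.

Lemma dim_lt (X Y : {vspace vT}) : (X <= Y)%VS -> X != Y -> (\dim X < \dim Y)%N.
Proof.
by move=> XY; rewrite eqEdim XY /= -ltnNge.
Qed.
Arguments dim_lt {X Y}.

Lemma mobius_fuelE n m (X : {vspace vT}) :
  (dimV - \dim X <= n)%N -> (dimV - \dim X <= m)%N ->
  mobius_fuel A n X = mobius_fuel A m X.
Proof.
elim: n m X => [|n IH] [|m] X /=; case: eqP => // /eqP XF hn hm;
  have := dim_lt (subvf X) XF; rewrite -subn_gt0 => d;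
  try by move: hn hm; rewrite leqn0 (gtn_eqF d) //.
congr (- _); apply: eq_bigr => Y /andP[XY XYn]; apply: IH.
  have := dim_lt XY XYn; move: hn; lia.
have := dim_lt XY XYn; move: hm; lia.
Qed.

Lemma mobius_rec (X : {vspace vT}) : X != fullv ->
  mobius A X = - \sum_(Y <- L | (X <= Y)%VS && (X != Y)) mobius A Y.
Proof.
move=> XF; have := dim_lt (subvf X) XF.
rewrite /mobius; case E: dimV => [|d] // _.
rewrite [LHS]/= (negbTE XF); congr (- _).
apply: eq_bigr => Y /andP[XY XYn]; apply: mobius_fuelE;
  have := dim_lt XY XYn; lia.
Qed.

Lemma mobius_full : mobius A fullv = 1.
Proof. by rewrite /mobius; case: dimV => /= [|n]; rewrite eqxx. Qed.

Lemma mobius_sum (Y : {vspace vT}) : Y \in L ->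
  \sum_(X <- L | (Y <= X)%VS) mobius A X = (Y == fullv)%:R.
Proof.
move=> YL; have uL : uniq L by rewrite undup_uniq.
rewrite big_mkcond.
case: eqP => [-> | /eqP YF].
  rewrite (bigD1_seq _ fullv_inL uL) /= subvv big1 ?mobius_full ?addr0 //.
  move=> X XF; case: ifP => // FX; exfalso; move: XF; rewrite eqEdim subvf.
  by rewrite (dimvS FX).
rewrite (bigD1_seq _ YL uL) /= subvv (@mobius_rec Y YF) -big_mkcondr.
rewrite [X in _ + X](eq_bigl (fun X => (Y <= X)%VS && (Y != X))) ?addNr //.
by move=> X; rewrite eq_sym andbC.
Qed.

Definition cl k (x : {ffun 'I_k -> vT}) : {vspace vT} :=
  (\bigcap_(i in [set i : 'I_(size A) | [forall t, x t \in H i]]) H i)%VS.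
Arguments cl {k}.

Lemma cl_inL k (x : {ffun 'I_k -> vT}) : cl x \in L.
Proof. by apply/inL; eexists. Qed.

Lemma cl_sub k (x : {ffun 'I_k -> vT}) X : X \in L ->
  (cl x <= X)%VS = [forall t, x t \in X].
Proof.
case/inL=> B ->; apply/idP/forallP.
  move=> sub t; rewrite memvE; apply: subv_trans sub.
  apply/subv_bigcapP => i; rewrite inE => /forallP /(_ t); by rewrite memvE.
move=> allin; apply/subv_bigcapP => i iB; apply: (bigcapv_inf i).
  rewrite inE; apply/forallP => t; have := allin t; rewrite !memvE => h.
  by apply: subv_trans h _; apply: (bigcapv_inf i) iB (subvv _).
exact: subvv.
Qed.

Lemma card_in k (X : {vspace vT}) :
  #|[set x : {ffun 'I_k -> vT} | [forall t, x t \in X]]| = ((#|F| ^ k) ^ \dim X)%N.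
Proof.
rewrite -expnM mulnC expnM -card_vspace -[k in (_ ^ k)%N]card_ord -card_ffun_on.
by apply: eq_card => x; rewrite inE; apply/forallP/familyP.
Qed.

Lemma chi_eval k : (char_poly_arr A).[(#|F| ^ k)%N%:R] =
  #|[set x : {ffun 'I_k -> vT} | cl x == fullv]|%:R.
Proof.
rewrite /char_poly_arr horner_sum.
under eq_bigr => X _ do rewrite hornerCM hornerXn -natrX.
transitivity (\sum_(X <- L) \sum_(x : {ffun 'I_k -> vT})
                 (mobius A X * ((cl x <= X)%VS)%:R)).
  apply: eq_big_seq => X XL; rewrite -mulr_sumr; congr (_ * _).
  rewrite -card_in -sum1_card natr_sum big_mkcond; apply: eq_bigr => x _.
  by rewrite inE cl_sub //; case: ifP.
rewrite exchange_big /= -sum1_card natr_sum [RHS]big_mkcond; apply: eq_bigr => x _.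
rewrite (eq_bigr (fun X => if (cl x <= X)%VS then mobius A X else 0)); last first.
  by move=> X _; case: ifP; rewrite ?mulr1 ?mulr0.
by rewrite -big_mkcond mobius_sum ?cl_inL // inE; case: eqP.
Qed.

Lemma cl_full k (x : {ffun 'I_k -> vT}) : is_arrangement A ->
  (cl x == fullv) = [forall i, ~~ [forall t, x t \in H i]].
Proof.
move=> /andP[_ hyp]; apply/eqP/forallP.
  move=> E i; apply/negP => allin.
  have : (cl x <= H i)%VS.
    by apply: (bigcapv_inf i); rewrite ?inE ?allin ?subvv.
  rewrite E => /dimvS.
  have := allP hyp _ (mem_tnth i (in_tuple A)); rewrite /is_hyperplane => /eqP.
  by move=> <-; rewrite ltnn.
move=> h; rewrite /cl big_pred0 // => i; rewrite inE; exact: negbTE (h i).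
Qed.

End Arr.
Arguments cl {F l A k}.

Theorem mainTheorem2 (F : finFieldType) (l : nat) (A : seq {vspace 'rV[F]_l}) :
  (1 <= l)%N ->
  is_arrangement A ->
  forall k : nat,
    (char_poly_arr A).[((#|F| ^ k)%N)%:R] = 0 ->
    forall j : nat, (j <= k)%N -> (char_poly_arr A).[((#|F| ^ j)%N)%:R] = 0.
Proof.
move=> _ arr k hk j jk; move: hk; rewrite !chi_eval => /eqP; rewrite pnatr_eq0 cards_eq0 => /eqP hk.
apply/eqP; rewrite pnatr_eq0 cards_eq0; apply: contraT => /set0Pn [x].
rewrite inE cl_full // => /forallP gx.
pose y : {ffun 'I_k -> 'rV[F]_l} := @finfun _ (fun _ => 'rV[F]_l) (fun t : 'I_k => if (insub (val t) : option 'I_j) is Some s then x s else 0).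
move/setP/(_ y): hk; rewrite !inE cl_full // => /negbT/negP H1; exfalso; apply: H1.
apply/forallP => i; apply/negP => /forallP hy.
case/negP: (gx i); apply/forallP => s.
have := hy (widen_ord jk s); rewrite ffunE.
by case: insubP => [s' _ /val_inj -> | ] //=; rewrite ltn_ord.
Qed.
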